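(* Let $S$ be an idempotent $\omega$-continuous semiring, $\mathcal X$ a finite set of variables, and $\vec x=\vec p=\vec f\oplus\vec a$ a system of polynomial equations, where $\vec a\in S^{\mathcal X}$ is the vector of constant parts and $\vec f=(f_x)_{x\in\mathcal X}$ consists of polynomials in which every monomial contains at least one variable. Let $\mu\vec p$ be the least solution of $\vec x=\vec p$. Let $M^{(0)}=\widehat{\vec f}$, $M^{(n+1)}=\mathrm{eval}_{M^{(n)}}(M^{(n)})$, and for $\vec b\in S^{\mathcal X}$ let $M^{(n)}_{\vec b}=\mathrm{eval}_{\vec b}(M^{(n)})$. Then: (1) for all $n\in\mathbb N$, $M^{(n)}_{\vec a}=N^{(2^n)}$; (2) if $\vec a\le\vec b\le\mu\vec p$, then $\sup_{n\in\mathbb N}M^{(n)}_{\vec b}=\mu\vec p$.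
   Context: Semiring notions: a semiring $(S,\oplus,\odot,0,1)$; natural order $a\le a\oplus b$ (componentwise on vectors); $\omega$-continuous: naturally ordered, chains have suprema, countable sums $\bigoplus_i a_i:=\sup_i(a_0\oplus\dots\oplus a_i)$ commute with $\odot$ on both sides and are invariant under partitioning; idempotent: $a\oplus a=a$. Monomials are words $a_1x_{i_1}\cdots a_lx_{i_l}a_{l+1}$ ($a_j\in S$, $x_{i_j}\in\mathcal X$), polynomials finite sums of monomials, interpreted as functions $S^{\mathcal X}\to S$; functions and vectors of functions form semirings with pointwise operations. $\mathrm{eval}_{\vec v}(g)$ is the composition $g\circ\vec v$ (or the value $g(\vec v)$ if $\vec v$ is a vector of constants), applied componentwise to vectors. A solution is $\vec v\in S^{\mathcal X}$ with $\vec v=\mathrm{eval}_{\vec v}(\vec p)$. Linear completion: a substitution $\{x\mapsto g\}$ applied to a polynomial $h$ yields the set $h\{x\mapsto g\}$ of polynomials obtained by replacing exactly one occurrence of $x$ in $h$ by $g$. Linear polynomial substitutions for $x$ are $\{x\mapsto x\}$ or $\{x\mapsto g\}$ with $g\in f_x\sigma_y$ for some variable $y$ and some linear polynomial substitution $\sigma_y$ for $y$ (mutual induction). $\widehat{\vec f}$ has components $\widehat{f_x}=\bigoplus_{\sigma_x}x\sigma_x$ where $x\{x\mapsto g\}=g$, summing over all linear polynomial substitutions for $x$. Newton iteration: for a polynomial $q$, a variable $y$ and $\vec v\in S^{\mathcal X}$, the differential $D_y q|_{\vec v}$ is defined by: $D_y(\bigoplus_i m_i)|_{\vec v}=\bigoplus_i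 D_y m_i|_{\vec v}$; $D_y(g\odot h)|_{\vec v}=(D_y g|_{\vec v}\odot\mathrm{eval}_{\vec v}(h))\oplus(\mathrm{eval}_{\vec v}(g)\odot D_y h|_{\vec v})$; $D_y q|_{\vec v}=0$ if $q\in S$ or $q$ is a variable other than $y$; $D_y y|_{\vec v}=y$. Further $Dq|_{\vec v}=\bigoplus_{y\in\mathcal X}D_yq|_{\vec v}$, componentwise on vectors, and $D\vec p|_{\vec v}^{*}=\bigoplus_{i\in\mathbb N}(D\vec p|_{\vec v})^i$ with $(D\vec p|_{\vec v})^0=\mathrm{id}$ and $(D\vec p|_{\vec v})^{i+1}=\mathrm{eval}_{(D\vec p|_{\vec v})^i}(D\vec p|_{\vec v})$. The Newton sequence is $N^{(0)}=\mathrm{eval}_{\vec 0}(\vec p)$, $N^{(n+1)}=\mathrm{eval}_{N^{(n)}}\big(D\vec p|_{N^{(n)}}^{*}\big)$. *)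

(* Defs.v *)
From mathcomp Require Import all_boot all_order all_algebra.
From Stdlib Require Import ClassicalEpsilon.
Set Implicit Arguments.
Unset Strict Implicit.
Unset Printing Implicit Defensive.
Import GRing.Theory.
Local Open Scope ring_scope.

Definition nle (S : pzSemiRingType) (a b : S) : Prop := exists c, a + c = b.

Definition vle (S : pzSemiRingType) (X : Type) (u v : X -> S) : Prop :=
  forall x, nle (u x) (v x).

Definition is_chain (S : pzSemiRingType) (u : nat -> S) : Prop :=
  forall i, nle (u i) (u i.+1).

Definition is_lub (S : pzSemiRingType) (u : nat -> S) (s : S) : Prop :=
  (forall i, nle (u i) s) /\ (forall t, (forall i, nle (u i) t) -> nle s t).

Definition sup (S : pzSemiRingType) (u : nat -> S) : S :=
  epsilon (inhabits 0) (fun s => is_lub u s).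

Definition csum (S : pzSemiRingType) (a : nat -> S) : S :=
  sup (fun i => \sum_(k < i.+1) a k).

Definition idempotent_sr (S : pzSemiRingType) : Prop := forall a : S, a + a = a.

(* A partition of
   the index set N is given by a block map part : nat -> nat (block j is
   part^-1(j), possibly empty); the sum over a block is the countable sum with
   the summands outside the block replaced by 0. *)
Definition omega_continuous (S : pzSemiRingType) : Prop :=
  [/\ (forall a b : S, nle a b -> nle b a -> a = b),
      (forall u : nat -> S, is_chain u -> exists s, is_lub u s),
      (forall (c : S) (a : nat -> S), c * csum a = csum (fun i => c * a i)),
      (forall (c : S) (a : nat -> S), csum a * c = csum (fun i => a i * c)) &
      (forall (a : nat -> S) (part : nat -> nat),
          csum a = csum (fun j => csum (fun i => if part i == j then a i else 0)))].

(* a monomial is a word over constants and variables; a polynomial is a finite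
   sum (list) of monomials *)
Inductive letter (S X : Type) := LCst of S | LVar of X.
Arguments LCst {S X}.
Arguments LVar {S X}.
Definition smonomial (S X : Type) := seq (letter S X).
Definition spoly (S X : Type) := seq (smonomial S X).

Definition is_var (S X : Type) (l : letter S X) : bool :=
  if l is LVar _ then true else false.

Definition leval (S : pzSemiRingType) (X : Type) (l : letter S X) (v : X -> S) : S :=
  match l with LCst c => c | LVar x => v x end.

Fixpoint meval (S : pzSemiRingType) (X : Type) (m : smonomial S X) (v : X -> S) : S :=
  match m with [::] => 1 | l :: m' => leval l v * meval m' v end.

Definition peval (S : pzSemiRingType) (X : Type) (p : spoly S X) (v : X -> S) : S :=
  \sum_(m <- p) meval m v.

Definition pvar (S X : Type) (x : X) : spoly S X := [:: [:: LVar x]].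

Definition psys (S : pzSemiRingType) (X : Type) (f : X -> spoly S X) (a : X -> S)
  : X -> spoly S X := fun x => [:: LCst (a x)] :: f x.

Fixpoint repl_mon (S : Type) (X : eqType) (m : smonomial S X) (y : X) (g : spoly S X)
  : seq (spoly S X) :=
  match m with
  | [::] => [::]
  | l :: m' =>
      (if l is LVar z then (if z == y then [:: [seq m'' ++ m' | m'' <- g]] else [::])
       else [::])
      ++ [seq [seq l :: m'' | m'' <- q] | q <- repl_mon m' y g]
  end.

(* h{y |-> g}: all polynomials obtained by replacing exactly one occurrence of y
   in the polynomial h by g *)
Fixpoint repl_poly (S : Type) (X : eqType) (h : spoly S X) (y : X) (g : spoly S X)
  : seq (spoly S X) :=
  match h with
  | [::] => [::]
  | m :: h' => [seq q ++ h' | q <- repl_mon m y g]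
               ++ [seq m :: r | r <- repl_poly h' y g]
  end.

(* lin_comp f k x: the polynomials x sigma_x for the linear polynomial
   substitutions sigma_x for x obtainable with at most k nested steps of the
   mutual induction (every one of them occurs for some k) *)
Fixpoint lin_comp (S : Type) (X : finType) (f : X -> spoly S X) (k : nat) (x : X)
  : seq (spoly S X) :=
  match k with
  | 0 => [:: pvar S x]
  | k'.+1 => pvar S x ::
       flatten [seq flatten [seq repl_poly (f x) y g | g <- lin_comp f k' y]
               | y <- enum X]
  end.

(* \hat f_x = (+)_{sigma_x} x sigma_x, as a function S^X -> S (countable sum,
   duplicates being irrelevant by idempotence) *)
Definition fhat (S : pzSemiRingType) (X : finType) (f : X -> spoly S X)
  : X -> (X -> S) -> S :=
  fun x v => csum (fun k => \sum_(g <- lin_comp f k x) peval g v).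

(* M^(0) = \hat f, M^(n+1) = eval_{M^(n)}(M^(n)) = M^(n) o M^(n) *)
Fixpoint Mseq (S : pzSemiRingType) (X : finType) (f : X -> spoly S X) (n : nat)
  : X -> (X -> S) -> S :=
  match n with
  | 0 => fhat f
  | n'.+1 => let M := Mseq f n' in fun x w => M x (fun y => M y w)
  end.

(* differential D_y, as a function of the argument w (D_y y|_v = y, i.e. w |-> w y) *)
Definition Dlet (S : pzSemiRingType) (X : eqType) (y : X) (l : letter S X)
  : (X -> S) -> S :=
  fun w => match l with LCst _ => 0 | LVar z => if z == y then w y else 0 end.

Fixpoint Dmon (S : pzSemiRingType) (X : eqType) (y : X) (v : X -> S) (m : smonomial S X)
  : (X -> S) -> S :=
  match m with
  | [::] => fun _ => 0
  | l :: m' => fun w => Dlet y l w * meval m' v + leval l v * Dmon y v m' w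
  end.

Definition Dypoly (S : pzSemiRingType) (X : eqType) (y : X) (v : X -> S) (q : spoly S X)
  : (X -> S) -> S := fun w => \sum_(m <- q) Dmon y v m w.

Definition Dpoly (S : pzSemiRingType) (X : finType) (q : spoly S X) (v : X -> S)
  : (X -> S) -> S := fun w => \sum_(y : X) Dypoly y v q w.

Definition Dvec (S : pzSemiRingType) (X : finType) (p : X -> spoly S X) (v : X -> S)
  : X -> (X -> S) -> S := fun x => Dpoly (p x) v.

Fixpoint Dpow (S : pzSemiRingType) (X : finType) (p : X -> spoly S X) (v : X -> S) (i : nat)
  : X -> (X -> S) -> S :=
  match i with
  | 0 => fun x w => w x
  | i'.+1 => fun x w => Dvec p v x (fun y => Dpow p v i' y w)
  end.

Definition Dstar (S : pzSemiRingType) (X : finType) (p : X -> spoly S X) (v : X -> S)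
  : X -> (X -> S) -> S := fun x w => csum (fun i => Dpow p v i x w).

Fixpoint Newton (S : pzSemiRingType) (X : finType) (p : X -> spoly S X) (n : nat)
  : X -> S :=
  match n with
  | 0 => fun x => peval (p x) (fun _ => 0)
  | n'.+1 => let N := Newton p n' in fun x => Dstar p N x N
  end.

Definition is_solution (S : pzSemiRingType) (X : Type) (p : X -> spoly S X) (v : X -> S)
  : Prop := forall x, v x = peval (p x) v.

Definition least_solution (S : pzSemiRingType) (X : Type) (p : X -> spoly S X) (mu : X -> S)
  : Prop := is_solution p mu /\ (forall v, is_solution p v -> vle mu v).

(* Main.v *)
Require Import Defs.
From mathcomp Require Import all_boot all_order all_algebra.
From Stdlib Require Import ClassicalEpsilon FunctionalExtensionality.
Set Implicit Arguments.
Unset Strict Implicit.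
Unset Printing Implicit Defensive.
Import GRing.Theory.
Local Open Scope ring_scope.

Section Order.
Variable S : pzSemiRingType.
Variable idem : idempotent_sr S.

Definition lee (a b : S) := a + b = b.

Lemma nleP a b : nle a b <-> lee a b.
Proof.
split; last by move=> h; exists b.
by case=> c <-; rewrite /lee addrA idem.
Qed.

Lemma lee_refl a : lee a a. Proof. exact: idem. Qed.
Lemma lee_trans a b c : lee a b -> lee b c -> lee a c.
Proof. by rewrite /lee => h1 h2; rewrite -h2 addrA h1. Qed.
Lemma lee_anti a b : lee a b -> lee b a -> a = b.
Proof. by rewrite /lee => h1 h2; rewrite -h1 -{1}h2 addrC. Qed.
Lemma lee0 a : lee 0 a. Proof. by rewrite /lee add0r. Qed.
Lemma leeDl a b : lee a (a + b). Proof. by rewrite /lee addrA idem. Qed.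
Lemma leeDr a b : lee b (a + b). Proof. by rewrite addrC; apply: leeDl. Qed.
Lemma leeD_lub a b c : lee a c -> lee b c -> lee (a + b) c.
Proof. by rewrite /lee => h1 h2; rewrite -addrA h2 h1. Qed.
Lemma leeD a b c d : lee a c -> lee b d -> lee (a + b) (c + d).
Proof.
move=> h1 h2; apply: leeD_lub.
  by apply: lee_trans h1 (leeDl _ _).
by apply: lee_trans h2 (leeDr _ _).
Qed.
Lemma leeMl a b c : lee a b -> lee (c * a) (c * b).
Proof. by rewrite /lee => h; rewrite -mulrDr h. Qed.
Lemma leeMr a b c : lee a b -> lee (a * c) (b * c).
Proof. by rewrite /lee => h; rewrite -mulrDl h. Qed.
Lemma leeM a b c d : lee a c -> lee b d -> lee (a * b) (c * d).
Proof. move=> h1 h2; apply: lee_trans (leeMr _ h1) (leeMl _ h2). Qed.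

Lemma lee_sum (I : Type) (r : seq I) (P : pred I) (F G : I -> S) :
  (forall i, P i -> lee (F i) (G i)) ->
  lee (\sum_(i <- r | P i) F i) (\sum_(i <- r | P i) G i).
Proof.
move=> h; elim: r => [|i r ih]; first by rewrite !big_nil; apply: lee_refl.
rewrite !big_cons; case: ifP => Pi //; exact: leeD (h _ Pi) ih.
Qed.

Lemma sum_lee (I : Type) (r : seq I) (P : pred I) (F : I -> S) c :
  (forall i, P i -> lee (F i) c) -> lee (\sum_(i <- r | P i) F i) c.
Proof.
move=> h; elim: r => [|i r ih]; first by rewrite big_nil; apply: lee0.
rewrite big_cons; case: ifP => Pi //; exact: leeD_lub (h _ Pi) ih.
Qed.

Lemma lee_sum_term (I : eqType) (r : seq I) (F : I -> S) i :
  i \in r -> lee (F i) (\sum_(j <- r) F j).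
Proof.
elim: r => [//|j r ih]; rewrite inE big_cons => /orP [/eqP->|/ih h].
  exact: leeDl.
exact: lee_trans h (leeDr _ _).
Qed.

Lemma lee_sum_ord n (F : 'I_n -> S) i : lee (F i) (\sum_(j < n) F j).
Proof. by apply: lee_sum_term; rewrite mem_index_enum. Qed.

Definition lub (u : nat -> S) s :=
  (forall i, lee (u i) s) /\ (forall t, (forall i, lee (u i) t) -> lee s t).

Lemma is_lubP u s : is_lub u s <-> lub u s.
Proof.
split=> [[h1 h2]|[h1 h2]]; split.
- by move=> i; apply/nleP.
- by move=> t ht; apply/nleP; apply: h2 => i; apply/nleP.
- by move=> i; apply/nleP.
- by move=> t ht; apply/nleP; apply: h2 => i; apply/nleP.
Qed.

Lemma lub_unique u s1 s2 : lub u s1 -> lub u s2 -> s1 = s2.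
Proof. by case=> a1 b1 [a2 b2]; apply: lee_anti; [apply: b1|apply: b2]. Qed.

Definition chain (u : nat -> S) := forall i, lee (u i) (u i.+1).

Lemma chain_mono u : chain u -> forall i j, (i <= j)%N -> lee (u i) (u j).
Proof.
move=> hc i j /subnK <-; elim: (j - i)%N => [|k ih]; first exact: lee_refl.
by rewrite addSn; apply: lee_trans ih (hc _).
Qed.


Variable oc : omega_continuous S.
Lemma sup_lub (u : nat -> S) : chain u -> lub u (sup u).
Proof.
move=> hc; case: oc => _ hch _ _ _.
have [s hs] : exists s, is_lub u s by apply: hch => i; apply/nleP.
apply/is_lubP; rewrite /sup; apply: epsilon_spec; by exists s.
Qed.

Lemma csum_lub (a : nat -> S) : lub a (csum a).
Proof.
rewrite /csum; set ps := fun i => _.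
have hc : chain ps.
  move=> i; rewrite /ps [X in lee _ X]big_ord_recr /=; apply: leeDl.
case: (sup_lub hc) => h1 h2; split.
  move=> i; apply: lee_trans (h1 i); rewrite /ps.
  exact: (lee_sum_ord (fun j : 'I_i.+1 => a j) ord_max).
move=> t ht; apply: h2 => i; rewrite /ps; exact: sum_lee.
Qed.

Lemma lub_shift (u : nat -> S) s : chain u -> lub u s -> lub (fun i => u i.+1) s.
Proof.
move=> hc [h1 h2]; split; first by move=> i; apply: h1.
move=> t ht; apply: h2 => i; apply: lee_trans (hc i) (ht i).
Qed.

Lemma lubM (u v : nat -> S) su sv : chain u -> chain v -> lub u su -> lub v sv ->
  lub (fun i => u i * v i) (su * sv).
Proof.
move=> cu cv lu lv; case: oc => _ _ hl hr _.
have eu : csum u = su by apply: lub_unique (csum_lub u) lu.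
have ev : csum v = sv by apply: lub_unique (csum_lub v) lv.
split.
  by move=> i; apply: leeM; [apply: lu.1|apply: lv.1].
move=> t ht.
rewrite -ev hl.
case: (csum_lub (fun i => su * v i)) => _ h; apply: h => k.
rewrite -eu hr.
case: (csum_lub (fun j => u j * v k)) => _ h'; apply: h' => j.
apply: lee_trans (ht (maxn j k)).
apply: leeM; apply: chain_mono => //; [exact: leq_maxl|exact: leq_maxr].
Qed.

Lemma lubD (u v : nat -> S) su sv : lub u su -> lub v sv ->
  lub (fun i => u i + v i) (su + sv).
Proof.
move=> [u1 u2] [v1 v2]; split; first by move=> i; apply: leeD.
move=> t ht; apply: leeD_lub.
  by apply: u2 => i; apply: lee_trans (ht i); apply: leeDl.
by apply: v2 => i; apply: lee_trans (ht i); apply: leeDr.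
Qed.

Lemma lub_cst (c : S) : lub (fun _ => c) c.
Proof. by split=> [i|t ht]; [apply: lee_refl|apply: ht 0%N]. Qed.


Variable X : finType.

Lemma meval_cat (m1 m2 : smonomial S X) v :
  meval (m1 ++ m2) v = meval m1 v * meval m2 v.
Proof. by elim: m1 => [|l m ih] /=; rewrite ?mul1r // ih mulrA. Qed.

Definition vlee (v w : X -> S) := forall z, lee (v z) (w z).

Lemma meval_mono (m : smonomial S X) v w : vlee v w -> lee (meval m v) (meval m w).
Proof.
move=> h; elim: m => [|l m ih] /=; first exact: lee_refl.
apply: leeM ih; case: l => [c|z] /=; [exact: lee_refl|exact: h].
Qed.

Lemma peval_mono (q : spoly S X) v w : vlee v w -> lee (peval q v) (peval q w).
Proof. by move=> h; apply: lee_sum => m _; apply: meval_mono. Qed.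

Definition dmon y v (m : smonomial S X) (c : S) := Dmon y v m (fun _ => c).

Lemma Dmon_ext y v m w : Dmon y v m w = dmon y v m (w y).
Proof.
rewrite /dmon; elim: m => [|l m ih] //=; rewrite ih; congr (_ * _ + _).
Qed.

Lemma dmonD y v m c1 c2 : dmon y v m (c1 + c2) = dmon y v m c1 + dmon y v m c2.
Proof.
rewrite /dmon; elim: m => [|l m ih] /=; first by rewrite addr0.
rewrite ih mulrDr.
case: l => [c|z] /=; first by rewrite !mul0r !add0r.
case: (z == y); last by rewrite !mul0r !add0r.
by rewrite mulrDl addrACA.
Qed.

Lemma dmon0 y v m : dmon y v m 0 = 0.
Proof.
rewrite /dmon; elim: m => [|l m ih] //=; rewrite ih mulr0 addr0.
by case: l => [c|z] /=; rewrite ?mul0r //; case: (z == y); rewrite mul0r.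
Qed.

Definition DY y v (h : spoly S X) c := Dypoly y v h (fun _ => c).

Lemma Dypoly_ext y v h w : Dypoly y v h w = DY y v h (w y).
Proof. by rewrite /DY /Dypoly; apply: eq_bigr => m _; rewrite !Dmon_ext. Qed.

Lemma DY_cons y v m h c : DY y v (m :: h) c = dmon y v m c + DY y v h c.
Proof. by rewrite /DY /Dypoly big_cons. Qed.

Lemma DYD y v h c1 c2 : DY y v h (c1 + c2) = DY y v h c1 + DY y v h c2.
Proof.
rewrite /DY /Dypoly -big_split /=; apply: eq_bigr => m _.
by rewrite -/(dmon _ _ _ _) dmonD.
Qed.

Lemma DY0 y v h : DY y v h 0 = 0.
Proof.
rewrite /DY /Dypoly big1 // => m _; exact: dmon0.
Qed.

Lemma DY_sum y v h (I : Type) (r : seq I) (P : pred I) (F : I -> S) :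
  DY y v h (\sum_(i <- r | P i) F i) = \sum_(i <- r | P i) DY y v h (F i).
Proof.
by apply: (big_morph (DY y v h)) => [c1 c2|]; [exact: DYD|exact: DY0].
Qed.

Lemma DY_mono y v h c1 c2 : lee c1 c2 -> lee (DY y v h c1) (DY y v h c2).
Proof. by rewrite /lee => e; rewrite -DYD e. Qed.


Lemma peval_consmap l (q : spoly S X) v :
  peval [seq l :: m | m <- q] v = leval l v * peval q v.
Proof. by rewrite /peval big_map mulr_sumr. Qed.

Lemma peval_cat (q1 q2 : spoly S X) v : peval (q1 ++ q2) v = peval q1 v + peval q2 v.
Proof. by rewrite /peval big_cat. Qed.

Lemma peval_cons m (q : spoly S X) v : peval (m :: q) v = meval m v + peval q v.
Proof. by rewrite /peval big_cons. Qed.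

Lemma repl_mon_sum (m : smonomial S X) y g v :
  \sum_(q <- repl_mon m y g) peval q v = dmon y v m (peval g v).
Proof.
rewrite /dmon; elim: m => [|l m ih] /=; first by rewrite big_nil.
rewrite big_cat big_map /=.
under [X in _ + X = _]eq_bigr do rewrite peval_consmap.
rewrite -mulr_sumr ih; congr (_ + _).
case: l => [c|z] /=; first by rewrite big_nil mul0r.
case: eqP => _; last by rewrite big_nil mul0r.
rewrite big_cons big_nil addr0 /peval big_map mulr_suml.
by apply: eq_bigr => m' _; rewrite meval_cat.
Qed.

Lemma sum_const_lee (I : Type) (r : seq I) (c : S) : lee (\sum_(i <- r) c) c.
Proof. by apply: sum_lee => _ _; apply: lee_refl. Qed.

Lemma repl_poly_lo (h : spoly S X) y g v :
  lee (DY y v h (peval g v)) (\sum_(q <- repl_poly h y g) peval q v).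
Proof.
elim: h => [|m h ih] /=; first by rewrite /DY /Dypoly !big_nil; apply: lee_refl.
rewrite DY_cons big_cat !big_map; apply: leeD.
  rewrite -repl_mon_sum; apply: lee_sum => q _; rewrite peval_cat; apply: leeDl.
apply: lee_trans ih _; apply: lee_sum => q _; rewrite peval_cons; apply: leeDr.
Qed.

Lemma repl_poly_hi (h : spoly S X) y g v :
  lee (\sum_(q <- repl_poly h y g) peval q v) (DY y v h (peval g v) + peval h v).
Proof.
elim: h => [|m h ih] /=; first by rewrite big_nil; apply: lee0.
have E1 : \sum_(q <- [seq q ++ h | q <- repl_mon m y g]) peval q v =
  \sum_(q <- repl_mon m y g) peval q v + \sum_(q <- repl_mon m y g) peval h v.
  by rewrite big_map -big_split; apply: eq_bigr => q _; rewrite peval_cat.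
have E2 : \sum_(q <- [seq m :: q | q <- repl_poly h y g]) peval q v =
  \sum_(q <- repl_poly h y g) meval m v + \sum_(q <- repl_poly h y g) peval q v.
  by rewrite big_map -big_split; apply: eq_bigr => q _; rewrite peval_cons.
rewrite DY_cons peval_cons big_cat /= E1 E2 repl_mon_sum.
have e1 := sum_const_lee (repl_mon m y g) (peval h v).
have e2 := sum_const_lee (repl_poly h y g) (meval m v).
set A := dmon _ _ _ _; set B := DY _ _ _ _; set C := meval m v; set D := peval h v.
apply: leeD_lub; apply: leeD_lub.
- exact: lee_trans (leeDl A B) (leeDl _ _).
- exact: lee_trans e1 (lee_trans (leeDr C D) (leeDr _ _)).
- exact: lee_trans e2 (lee_trans (leeDl C D) (leeDr _ _)).
- exact: lee_trans ih (leeD (leeDr A B) (leeDr C D)).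
Qed.


Lemma Dmon_self_le y v (m : smonomial S X) : lee (dmon y v m (v y)) (meval m v).
Proof.
rewrite /dmon; elim: m => [|l m ih] /=; first exact: lee0.
apply: leeD_lub; last exact: leeMl.
apply: leeMr; case: l => [c|z] /=; first exact: lee0.
by case: eqP => [->|_]; [apply: lee_refl|apply: lee0].
Qed.

Lemma DY_self_le y v (h : spoly S X) : lee (DY y v h (v y)) (peval h v).
Proof. by apply: lee_sum => m _; apply: Dmon_self_le. Qed.

Lemma meval_le_Dmon (m : smonomial S X) v :
  has (@is_var S X) m -> exists z, lee (meval m v) (dmon z v m (v z)).
Proof.
rewrite /dmon; elim: m => [//|l m ih] /=.
case: l => [c|z] /=.
  move=> /ih [z hz]; exists z; rewrite mul0r add0r; exact: leeMl.
move=> _; exists z; rewrite eqxx; exact: leeDl.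
Qed.

Lemma peval_le_sumDY (h : spoly S X) v :
  all (fun m => has (@is_var S X) m) h ->
  lee (peval h v) (\sum_(y : X) DY y v h (v y)).
Proof.
move=> hh; rewrite /DY /Dypoly exchange_big /=.
elim: h hh => [|m h ih] /=; first by move=> _; rewrite /peval !big_nil; apply: lee0.
move=> /andP [hm hh]; rewrite peval_cons big_cons; apply: leeD (ih hh).
have [z hz] := meval_le_Dmon v hm.
apply: lee_trans hz _; exact: (lee_sum_term (fun y => dmon y v m (v y)) (mem_index_enum z)).
Qed.

Lemma meval0 (m : smonomial S X) : has (@is_var S X) m -> meval m (fun _ => 0) = 0.
Proof.
elim: m => [//|l m ih] /=; case: l => [c|z] /=; last by rewrite mul0r.
by move=> /ih ->; rewrite mulr0.
Qed.

Variable f : X -> spoly S X.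
Variable a : X -> S.
Hypothesis hf : forall x, all (fun m => has (@is_var S X) m) (f x).

Definition p := psys f a.

Lemma Dvec_psys v x w : Dvec p v x w = \sum_(y : X) DY y v (f x) (w y).
Proof.
rewrite /Dvec /Dpoly; apply: eq_bigr => y _.
by rewrite Dypoly_ext /p /psys DY_cons /dmon /= mul0r mulr0 !add0r.
Qed.

Definition Aq k v x := \sum_(g <- lin_comp f k x) peval g v.
Definition Bq k v x := \sum_(i < k.+1) Dpow p v i x v.

Lemma Bq_succ k v x : Bq k.+1 v x = v x + \sum_(y : X) DY y v (f x) (Bq k v y).
Proof.
rewrite /Bq big_ord_recl /=; congr (_ + _).
under eq_bigr do rewrite Dvec_psys.
rewrite exchange_big /=; apply: eq_bigr => y _; by rewrite DY_sum.
Qed.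

Lemma Aq_succ k v x : Aq k.+1 v x = v x +
  \sum_(y <- enum X) \sum_(g <- lin_comp f k y) \sum_(q <- repl_poly (f x) y g) peval q v.
Proof.
rewrite /Aq /= big_cons /pvar peval_cons /peval big_nil addr0 /= mulr1.
congr (_ + _); rewrite big_flatten /= big_map; apply: eq_bigr => y _.
by rewrite big_flatten /= big_map.
Qed.

Lemma Bq0 v x : Bq 0 v x = v x.
Proof. by rewrite /Bq big_ord1. Qed.

Lemma Aq0 v x : Aq 0 v x = v x.
Proof. by rewrite /Aq /= big_cons big_nil addr0 /pvar peval_cons /peval big_nil addr0 /= mulr1. Qed.

Lemma sum_enum (F : X -> S) : \sum_(y <- enum X) F y = \sum_(y : X) F y.
Proof. by rewrite big_enum. Qed.

Lemma Bq_ge k v y : lee (v y) (Bq k v y).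
Proof.
by rewrite -{1}(Bq0 v y) /Bq big_ord1; apply: (lee_sum_ord (fun i : 'I_k.+1 => Dpow p v i y v) ord0).
Qed.

Lemma AqBq k v x : Aq k v x = Bq k v x.
Proof.
elim: k x => [|k ih] x; first by rewrite Aq0 Bq0.
rewrite Aq_succ Bq_succ sum_enum.
have E : \sum_(y : X) DY y v (f x) (Bq k v y) =
    \sum_(y : X) \sum_(g <- lin_comp f k y) DY y v (f x) (peval g v).
  by apply: eq_bigr => y _; rewrite -ih /Aq DY_sum.
rewrite E; set T := \sum_(y : X) \sum_(g <- lin_comp f k y) DY y v (f x) (peval g v).
set R := \sum_(y : X) \sum_(g <- lin_comp f k y) _.
set P := peval (f x) v.
have Lo : lee T R.
  by apply: lee_sum => y _; apply: lee_sum => g _; apply: repl_poly_lo.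
have Hi : lee R (T + P).
  apply: lee_trans (_ : lee _ (\sum_(y : X) \sum_(g <- lin_comp f k y)
                          (DY y v (f x) (peval g v) + P))) _.
    by apply: lee_sum => y _; apply: lee_sum => g _; apply: repl_poly_hi.
  under eq_bigr do rewrite big_split /=.
  rewrite big_split /=; apply: leeD; first exact: lee_refl.
  by apply: sum_lee => y _; apply: sum_const_lee.
have hP : lee P T.
  apply: lee_trans (peval_le_sumDY v (hf x)) _; rewrite /T.
  apply: lee_sum => y _; rewrite -DY_sum; apply: DY_mono.
  by rewrite -/(Aq k v y) ih; apply: Bq_ge.
apply: lee_anti; apply: leeD (lee_refl _) _; last exact: Lo.
apply: lee_trans Hi _; apply: leeD_lub; [exact: lee_refl|exact: hP].
Qed.


Lemma Bq_chain v x : chain (fun k => Bq k v x).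
Proof. by move=> k; rewrite /Bq [X in lee _ X]big_ord_recr /=; apply: leeDl. Qed.

Lemma partial_Aq n v x : \sum_(k < n.+1) Aq k v x = Bq n v x.
Proof.
elim: n => [|n ih]; first by rewrite big_ord1 AqBq.
rewrite big_ord_recr /= ih AqBq; exact: Bq_chain.
Qed.

Lemma fhat_eq x v : fhat f x v = Dstar p v x v.
Proof.
rewrite /fhat /Dstar /csum; congr sup; apply: functional_extensionality => n.
exact: partial_Aq.
Qed.

Lemma fhat_lub x v : lub (fun k => Bq k v x) (fhat f x v).
Proof.
have -> : fhat f x v = sup (fun k => Bq k v x).
  rewrite /fhat /csum; congr sup; apply: functional_extensionality => n.
  exact: partial_Aq.
exact: sup_lub (Bq_chain v x).
Qed.

Definition Fv (v : X -> S) : X -> S := fun x => fhat f x v.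

Lemma Mseq_iter n x w : Mseq f n x w = iter (2 ^ n) Fv w x.
Proof.
elim: n x w => [|n ih] x w //=.
rewrite ih expnS mul2n -addnn iterD; congr (iter _ Fv _ x).
by apply: functional_extensionality => y; rewrite ih.
Qed.

Lemma Newton_iter k : Newton p k = iter k Fv a.
Proof.
elim: k => [|k ih] /=.
  apply: functional_extensionality => x.
  rewrite /p /psys peval_cons /= mulr1.
  elim: (f x) (hf x) => [|m h ihh] /=; first by rewrite /peval big_nil addr0.
  by move=> /andP [hm hh]; rewrite peval_cons meval0 // add0r ihh.
by rewrite -ih; apply: functional_extensionality => x; rewrite /Fv fhat_eq.
Qed.


Lemma Fv_infl v : vlee v (Fv v).
Proof. by move=> x; rewrite -(Bq0 v x); apply: (fhat_lub x v).1. Qed.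

Lemma Fv_ge_f v x : lee (peval (f x) v) (Fv v x).
Proof.
apply: lee_trans _ ((fhat_lub x v).1 1%N); rewrite Bq_succ.
apply: lee_trans _ (leeDr (v x) _); apply: lee_trans (peval_le_sumDY v (hf x)) _.
by apply: lee_sum => y _; rewrite Bq0; apply: lee_refl.
Qed.

Lemma Fv_mono v w : vlee v w -> vlee (Fv v) (Fv w).
Proof.
move=> h x; apply: (fhat_lub x v).2 => k.
apply: lee_trans ((fhat_lub x w).1 k); rewrite -!AqBq.
by apply: lee_sum => g _; apply: peval_mono.
Qed.

Lemma Fv_mu mu : is_solution p mu -> vlee (Fv mu) mu.
Proof.
move=> hs x; apply: (fhat_lub x mu).2 => k.
have hf_mu y : lee (peval (f y) mu) (mu y).
  by rewrite hs /p /psys peval_cons; apply: leeDr.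
have hD i : forall y, lee (Dpow p mu i y mu) (mu y).
  elim: i => [|i ih] y /=; first exact: lee_refl.
  rewrite Dvec_psys; apply: lee_trans (hf_mu y).
  apply: sum_lee => z _; apply: lee_trans (DY_self_le z mu (f y)).
  exact: DY_mono.
by apply: sum_lee => i _; apply: hD.
Qed.


Lemma iter_mono j v w : vlee v w -> vlee (iter j Fv v) (iter j Fv w).
Proof. by elim: j => [|j ih] //= h; apply: Fv_mono; apply: ih. Qed.

Lemma iter_step j v : vlee (iter j Fv v) (iter j.+1 Fv v).
Proof. by move=> x; apply: Fv_infl. Qed.

Lemma iter_le i j v : (i <= j)%N -> vlee (iter i Fv v) (iter j Fv v).
Proof.
move=> hij x; apply: (chain_mono (u := fun k => iter k Fv v x)) hij.
by move=> k; apply: iter_step.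
Qed.

Lemma cont_meval (w : nat -> X -> S) s (m : smonomial S X) :
  (forall k, vlee (w k) (w k.+1)) -> (forall z, lub (fun k => w k z) (s z)) ->
  lub (fun k => meval m (w k)) (meval m s).
Proof.
move=> hc hl; elim: m => [|l m ih] /=; first exact: lub_cst.
apply: lubM => //.
- by case: l => [c|z] k /=; [apply: lee_refl|apply: hc].
- by move=> k; apply: meval_mono.
- by case: l => [c|z] /=; [apply: lub_cst|apply: hl].
Qed.

Lemma cont_peval (w : nat -> X -> S) s (q : spoly S X) :
  (forall k, vlee (w k) (w k.+1)) -> (forall z, lub (fun k => w k z) (s z)) ->
  lub (fun k => peval q (w k)) (peval q s).
Proof.
move=> hc hl; elim: q => [|m q ih].
  have -> : (fun k => peval [::] (w k)) = fun _ => 0.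
    by apply: functional_extensionality => k; rewrite /peval big_nil.
  by rewrite /peval big_nil; apply: lub_cst.
have -> : (fun k => peval (m :: q) (w k)) = fun k => meval m (w k) + peval q (w k).
  by apply: functional_extensionality => k; rewrite peval_cons.
by rewrite peval_cons; apply: lubD => //; apply: cont_meval.
Qed.

Fixpoint kl (k : nat) : X -> S :=
  match k with 0 => fun _ => 0 | k'.+1 => fun y => peval (p y) (kl k') end.

Lemma kl_chain k : vlee (kl k) (kl k.+1).
Proof.
elim: k => [|k ih] y /=; first exact: lee0.
exact: peval_mono.
Qed.

Lemma part2 mu b x : least_solution p mu -> vlee a b -> vlee b mu ->
  lub (fun n => iter (2 ^ n) Fv b x) (mu x).
Proof.
move=> [hsol hleast] hab hbm; split.
  move=> n; suff h : forall j, vlee (iter j Fv b) mu by apply: h.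
  elim=> [|j ih] //= z; apply: lee_trans (Fv_mu hsol z).
  exact: Fv_mono.
move=> t ht.
have hkl : forall k, vlee (kl k) (iter k Fv b).
  elim=> [|k ih] y /=; first exact: lee0.
  rewrite /p /psys peval_cons /= mulr1; apply: leeD_lub.
    apply: lee_trans (hab y) _; apply: lee_trans (iter_le b (leq0n k.+1) y).
    exact: lee_refl.
  apply: lee_trans (Fv_ge_f _ y); exact: peval_mono.
pose s y := sup (fun k => kl k y).
have hs : forall y, lub (fun k => kl k y) (s y).
  by move=> y; apply: sup_lub => k; apply: kl_chain.
have sol : is_solution p s.
  move=> y; apply: (lub_unique (u := fun k => kl k.+1 y)).
    by apply: (lub_shift (u := fun k => kl k y)) => //; move=> k; apply: kl_chain.
  exact: (cont_peval (p y) kl_chain hs).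
have hms : vlee mu s by move=> y; apply/nleP; apply: hleast.
apply: lee_trans (hms x) _; apply: (hs x).2 => k.
apply: lee_trans (hkl k x) _; apply: lee_trans _ (ht k).
apply: iter_le; exact: (ltnW (ltn_expl k (isT : (1 < 2)%N))).
Qed.

End Order.

Theorem theorem9 (S : pzSemiRingType) (X : finType) (f : X -> spoly S X) (a : X -> S)
  (mu : X -> S) :
  idempotent_sr S -> omega_continuous S ->
  (forall x, all (fun m => has (@is_var S X) m) (f x)) ->
  least_solution (psys f a) mu ->
  (forall (n : nat) (x : X), Mseq f n x a = Newton (psys f a) (2 ^ n)%N x) /\
  (forall b : X -> S, vle a b -> vle b mu ->
     forall x : X, is_lub (fun n => Mseq f n x b) (mu x)).
Proof.
move=> idem oc hf hmu; split.
  move=> n x; rewrite Mseq_iter (_ : psys f a = p f a) // (Newton_iter idem a hf).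
  by [].
move=> b hab hbm x; apply/(is_lubP idem).
have -> : (fun n => Mseq f n x b) = fun n => iter (2 ^ n) (Fv f) b x.
  by apply: functional_extensionality => n; rewrite Mseq_iter.
apply: (part2 (a := a) idem oc hf).
- exact: hmu.
- by move=> y; apply/(nleP idem).
- by move=> y; apply/(nleP idem).
Qed.
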